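(* Let $n\ge1$ and $\mathcal{A},\mathcal{B}\subseteq D_n$. Suppose either ($I_0A_+=A_+$ and $I_0B_+=B_+$) or ($I_0A_-=A_-$ and $I_0B_-=B_-$). Then $\mathcal{A}$ and $\mathcal{B}$ are right-homometric if and only if they are left-homometric.
   Context: $D_n$ is the set of pairs $(k,\epsilon)$, $k\in\mathbb{Z}_n$, $\epsilon\in\{1,-1\}$, with multiplication $(k,\epsilon)(l,\eta)=(k+\epsilon l,\epsilon\eta)$. Right interval ${}^r\mathbf{int}(x,y)=x^{-1}y$, left interval ${}^l\mathbf{int}(x,y)=yx^{-1}$; ${}^{r}\mathbf{iv}(\mathcal{A})(g)=\#\{(x,y)\in\mathcal{A}^2:{}^r\mathbf{int}(x,y)=g\}$, similarly ${}^l\mathbf{iv}$; right-/left-homometric means equal ${}^r\mathbf{iv}$ / ${}^l\mathbf{iv}$. $A_+=\{k:(k,1)\in\mathcal{A}\}$, $A_-=\{k:(k,-1)\in\mathcal{A}\}$, similarly $B_\pm$. For $A\subseteq\mathbb{Z}_n$, $I_0A=\{-a:a\in A\}$. *)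

(* Defs.v *)
From HB Require Import structures.
From mathcomp Require Import all_boot all_order all_algebra.
Set Implicit Arguments. Unset Strict Implicit. Unset Printing Implicit Defensive.
Import GRing.Theory.
Local Open Scope ring_scope.

(* Z_n, for n >= 1, as the ordinal type 'I_(n.-1).+1 (which has the Zp
   additive group structure; for n >= 1 its cardinality is n). *)
Definition Zn (n : nat) : finZmodType := 'I_(n.-1).+1.

(* D_n = Z_n x {1,-1}; the sign epsilon is encoded by a bool:
   true <-> 1, false <-> -1. *)
Definition Dn (n : nat) : finType := (Zn n * bool)%type.

Definition sgact (n : nat) (e : bool) (l : Zn n) : Zn n := if e then l else - l.

(* (k,e)(l,h) = (k + e l, e h) *)
Definition dmul (n : nat) (x y : Dn n) : Dn n :=
  (x.1 + sgact x.2 y.1, x.2 == y.2).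

Definition dinv (n : nat) (x : Dn n) : Dn n := (- sgact x.2 x.1, x.2).

Definition rint (n : nat) (x y : Dn n) : Dn n := dmul (dinv x) y.
Definition lint (n : nat) (x y : Dn n) : Dn n := dmul y (dinv x).

Definition riv (n : nat) (A : {set Dn n}) (g : Dn n) : nat :=
  #|[set p : Dn n * Dn n | [&& p.1 \in A, p.2 \in A & rint p.1 p.2 == g]]|.
Definition liv (n : nat) (A : {set Dn n}) (g : Dn n) : nat :=
  #|[set p : Dn n * Dn n | [&& p.1 \in A, p.2 \in A & lint p.1 p.2 == g]]|.

Definition right_homometric (n : nat) (A B : {set Dn n}) : Prop :=
  forall g, riv A g = riv B g.
Definition left_homometric (n : nat) (A B : {set Dn n}) : Prop :=
  forall g, liv A g = liv B g.

Definition Aplus (n : nat) (A : {set Dn n}) : {set Zn n} := [set k | (k, true) \in A].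
Definition Aminus (n : nat) (A : {set Dn n}) : {set Zn n} := [set k | (k, false) \in A].

Definition I0 (n : nat) (A : {set Zn n}) : {set Zn n} := [set - a | a in A].

(* Main.v *)
Require Import Defs.
From mathcomp Require Import all_boot all_order all_algebra.
Import GRing.Theory.
Local Open Scope ring_scope.

Section S.
Variable n : nat.
Implicit Types A : {set Dn n}.

Definition phi1 (p : Dn n * Dn n) : Dn n * Dn n :=
  match p with
  | ((k, true), (l, true)) => p
  | ((k, false), (l, false)) => (p.2, p.1)
  | ((k, true), (l, false)) => ((-k, true), (l, false))
  | ((k, false), (l, true)) => ((k, false), (-l, true))
  end.

Definition phi2 (p : Dn n * Dn n) : Dn n * Dn n :=
  match p with
  | ((k, true), (l, true)) => (p.2, p.1)
  | ((k, false), (l, false)) => p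
  | ((k, true), (l, false)) => ((k, true), (-l, false))
  | ((k, false), (l, true)) => ((-k, false), (l, true))
  end.

Lemma phi1K : involutive phi1.
Proof. by case=> [[k e] [l h]]; case: e; case: h => //=; rewrite opprK. Qed.
Lemma phi2K : involutive phi2.
Proof. by case=> [[k e] [l h]]; case: e; case: h => //=; rewrite opprK. Qed.

Definition neg1 (g : Dn n) : Dn n := (- g.1, g.2).

Lemma phi1_int (p : Dn n * Dn n) : lint (phi1 p).1 (phi1 p).2 = rint p.1 p.2.
Proof.
case: p => [[k e] [l h]]; case: e; case: h;
rewrite /lint /rint /dmul /dinv /sgact /=; congr pair;
by rewrite ?opprK // addrC.
Qed.

Lemma phi2_int (p : Dn n * Dn n) : lint (phi2 p).1 (phi2 p).2 = neg1 (rint p.1 p.2).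
Proof.
case: p => [[k e] [l h]]; case: e; case: h;
rewrite /neg1 /lint /rint /dmul /dinv /sgact /=.
all: by rewrite ?opprD ?opprK // addrC.
Qed.

Lemma I0_mem (S : {set Zn n}) k : I0 S = S -> ((- k) \in S) = (k \in S).
Proof.
move=> HS; apply/idP/idP => H.
  by rewrite -HS -[k]opprK; apply/imsetP; exists (- k).
by rewrite -HS; apply/imsetP; exists k.
Qed.

Lemma gen_lemma A (phi f : Dn n * Dn n -> Dn n * Dn n) (F : Dn n -> Dn n) :
  involutive phi -> involutive F ->
  (forall p, ((phi p).1 \in A) && ((phi p).2 \in A) = (p.1 \in A) && (p.2 \in A)) ->
  (forall p, lint (phi p).1 (phi p).2 = F (rint p.1 p.2)) ->
  forall g, liv A g = riv A (F g).
Proof.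
move=> phiK FK Hm Hi g.
rewrite /liv /riv -(card_imset _ (can_inj phiK)).
apply: eq_card => p; rewrite inE.
apply/idP/idP.
  case/imsetP => q; rewrite inE => /andP [H1 /andP [H2 /eqP H3]] ->.
  have HH := Hi (phi q); rewrite phiK H3 in HH.
  by rewrite andbA Hm H1 H2 /= HH FK eqxx.
move=> /andP [H1 /andP [H2 /eqP H3]].
apply/imsetP; exists (phi p); last by rewrite phiK.
by rewrite inE andbA Hm H1 H2 /= Hi H3 FK eqxx.
Qed.
End S.
Arguments phi1 {n}. Arguments phi2 {n}. Arguments neg1 {n}.
Arguments gen_lemma {n A phi} f {F}.
Arguments I0_mem {n S}.

Lemma phi1_mem {n} {A : {set Dn n}} : I0 (Aplus A) = Aplus A ->
  forall p, ((phi1 p).1 \in A) && ((phi1 p).2 \in A) = (p.1 \in A) && (p.2 \in A).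
Proof.
move=> H.
have key : forall k, ((-k, true) \in A) = ((k, true) \in A).
  by move=> k; have := I0_mem k H; rewrite !inE.
by case=> [[k e] [l h]]; case: e; case: h; rewrite /= ?key // andbC.
Qed.

Lemma phi2_mem {n} {A : {set Dn n}} : I0 (Aminus A) = Aminus A ->
  forall p, ((phi2 p).1 \in A) && ((phi2 p).2 \in A) = (p.1 \in A) && (p.2 \in A).
Proof.
move=> H.
have key : forall k, ((-k, false) \in A) = ((k, false) \in A).
  by move=> k; have := I0_mem k H; rewrite !inE.
by case=> [[k e] [l h]]; case: e; case: h; rewrite /= ?key // andbC.
Qed.

Lemma neg1K {n} : involutive (@neg1 n).
Proof. by case=> k e; rewrite /neg1 /= opprK. Qed.

Theorem mainTheorem9 (n : nat) (hn : (1 <= n)%N) (A B : {set Dn n}) :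
  (I0 (Aplus A) = Aplus A /\ I0 (Aplus B) = Aplus B) \/
  (I0 (Aminus A) = Aminus A /\ I0 (Aminus B) = Aminus B) ->
  (right_homometric A B <-> left_homometric A B).
Proof.
case=> [[HA HB] | [HA HB]].
  have EA := gen_lemma id (F := id) (@phi1K n) (fun x : Dn n => erefl x) (phi1_mem HA) (@phi1_int n).
  have EB := gen_lemma id (F := id) (@phi1K n) (fun x : Dn n => erefl x) (phi1_mem HB) (@phi1_int n).
  by split=> H g; rewrite ?EA ?EB // -EA -EB.
have EA := gen_lemma id (@phi2K n) (@neg1K n) (phi2_mem HA) (@phi2_int n).
have EB := gen_lemma id (@phi2K n) (@neg1K n) (phi2_mem HB) (@phi2_int n).
split=> H g; first by rewrite EA EB.
by rewrite -(neg1K g) -EA -EB.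
Qed.
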